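(* Let $0<q<1/2$, $p=1-q$, $\lambda=q/p<1$, and let $z\geq 1$ and $A\geq z$ be integers. The probability $P_A(z)$ that the $A$-Nakamoto double spend attack (described in the context) succeeds is $$P_A(z)=\frac{I_{4pq}(z,1/2)-\lambda^{A+1}}{1-\lambda^{A+1}},$$ where $I_x(a,b)=\frac{\Gamma(a+b)}{\Gamma(a)\Gamma(b)}\int_0^x t^{a-1}(1-t)^{b-1}\,dt$ is the regularized incomplete Beta function and $\Gamma$ is Euler's Gamma function.
   Context: Mining model: the attacker has relative hashrate $q$ and the honest miners relative hashrate $p=1-q$; blocks found by the honest miners and by the attacker form independent Poisson processes with rates $p/\tau_0$ and $q/\tau_0$ respectively ($\tau_0>0$ the mean interblock time); block propagation is instantaneous and difficulty is constant. The recipient of a transaction requires $z$ confirmations. The $A$-Nakamoto double spend strategy (with one pre-mined block) is: (1) the attacker mines on top of the last block of the official blockchain a block containing a transaction returning the payment funds to an address he controls; if the honest miners find a block first, he restarts mining on top of the new last official block; (2) once he has mined this one block (kept secret, with the honest miners not having found a block meanwhile), he sends the paying transaction to the vendor and keeps mining on his secret fork, while the honest miners extend the official chain; (3) the lag is (number of official blocks after the fork point) minus (number of blocks of the secret fork); if the lag reaches $A$ the attacker gives up and the attack fails; (4) if, at a moment when the official chain has added at least $z$ blocks (confirmations of the vendor transaction), the secret fork is strictly longer than the official chain (lag $\leq -1$), the attacker publishes it and the attack succeeds. The attack cycle ends at success or failure. *)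

(* Defs.v *)
From Stdlib Require Import Reals ZArith List Lra.
From Coquelicot Require Import Coquelicot.
Import ListNotations.
Open Scope R_scope.

Definition Gamma (s : R) : R :=
  RInt_gen (fun t => Rpower t (s - 1) * exp (- t)) (at_right 0) (Rbar_locally p_infty).

Definition inc_beta (x a b : R) : R :=
  Gamma (a + b) / (Gamma a * Gamma b) *
  RInt (fun t => Rpower t (a - 1) * Rpower (1 - t) (b - 1)) 0 x.

(** Discrete model of the attack after the pre-mined block (step (2) onwards).
    A block sequence is a list of booleans: [true] = block found by the honest
    miners, [false] = block found by the attacker. *)

Fixpoint block_seqs (n : nat) : list (list bool) :=
  match n with
  | O => (@nil bool) :: nil
  | S k => List.map (cons true) (block_seqs k) ++ List.map (cons false) (block_seqs k)
  end.

Definition seq_weight (p q : R) (l : list bool) : R :=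
  List.fold_right (fun (b : bool) (w : R) => (if b then p else q) * w) 1 l.

(** Outcome of the attack cycle along a block sequence, starting from [n] official
    blocks after the fork point and [m] blocks on the secret fork:
    [Some true] = success, [Some false] = failure (lag reached A),
    [None] = not yet decided. *)
Fixpoint attack_outcome (z A : nat) (n m : nat) (l : list bool) : option bool :=
  match l with
  | nil => None
  | b :: l' =>
      let n' := if b then S n else n in
      let m' := if b then m else S m in
      let lag := (Z.of_nat n' - Z.of_nat m')%Z in
      if Z.leb (Z.of_nat A) lag then Some false
      else if andb (Nat.leb z n') (Z.leb lag (-1)) then Some true
      else attack_outcome z A n' m' l'
  end.

(** Probability that the attack has succeeded within the first [k] blocks mined
    after the vendor transaction is sent (start: 0 official blocks after the fork,
    1 pre-mined secret block, i.e. lag = -1). *)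
Definition attack_success_by (p q : R) (z A : nat) (k : nat) : R :=
  List.fold_right Rplus 0
    (List.map (fun l => seq_weight p q l *
                   match attack_outcome z A 0 1 l with Some true => 1 | _ => 0 end)
         (block_seqs k)).

(* Main.v *)
Require Import Defs.
From Stdlib Require Import Reals ZArith List Lra Lia Factorial.
From Stdlib Require Classical_Prop.
From Coquelicot Require Import Coquelicot.
Open Scope R_scope.

Definition Ek (p q : R) (k : nat) (F : list bool -> R) : R :=
  List.fold_right Rplus 0
    (List.map (fun l => seq_weight p q l * F l) (block_seqs k)).

Lemma fold_sum_app (l1 l2 : list R) :
  fold_right Rplus 0 (l1 ++ l2) = fold_right Rplus 0 l1 + fold_right Rplus 0 l2.
Proof. induction l1; simpl; [ring| rewrite IHl1; ring]. Qed.

Lemma fold_sum_scal {X} (c : R) (g : X -> R) (L : list X) :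
  fold_right Rplus 0 (map (fun x => c * g x) L) = c * fold_right Rplus 0 (map g L).
Proof. induction L; simpl; [ring| rewrite IHL; ring]. Qed.

Lemma Ek_0 p q F : Ek p q 0 F = F nil.
Proof. unfold Ek; simpl; ring. Qed.

Lemma Ek_S p q k F : Ek p q (S k) F =
  p * Ek p q k (fun l => F (true :: l)) + q * Ek p q k (fun l => F (false :: l)).
Proof.
  unfold Ek; simpl block_seqs. rewrite map_app, fold_sum_app, !map_map.
  rewrite <- !fold_sum_scal. f_equal; f_equal; apply map_ext; intros; simpl; ring.
Qed.

Lemma Ek_ext p q k F G : (forall l, F l = G l) -> Ek p q k F = Ek p q k G.
Proof. intros H; unfold Ek; f_equal; apply map_ext; intros; rewrite H; auto. Qed.

Lemma Ek_plus p q k F G : Ek p q k (fun l => F l + G l) = Ek p q k F + Ek p q k G.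
Proof.
  revert F G; induction k; intros F G.
  - rewrite !Ek_0; auto.
  - rewrite !Ek_S, IHk, IHk; ring.
Qed.

Lemma Ek_scal p q k c F : Ek p q k (fun l => c * F l) = c * Ek p q k F.
Proof.
  revert F; induction k; intros F.
  - rewrite !Ek_0; auto.
  - rewrite !Ek_S. rewrite (IHk (fun l => F (true :: l))), (IHk (fun l => F (false :: l))). ring.
Qed.

Lemma Ek_const p q k c : p + q = 1 -> Ek p q k (fun _ => c) = c.
Proof.
  intros Hpq; induction k.
  - rewrite Ek_0; auto.
  - rewrite Ek_S, IHk. nra.
Qed.

Lemma Ek_mono p q k F G : 0 <= p -> 0 <= q -> (forall l, F l <= G l) -> Ek p q k F <= Ek p q k G.
Proof.
  intros Hp Hq; revert F G; induction k; intros F G H.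
  - rewrite !Ek_0; auto.
  - rewrite !Ek_S.
    assert (H1 := IHk (fun l => F (true :: l)) (fun l => G (true :: l)) (fun l => H _)).
    assert (H2 := IHk (fun l => F (false :: l)) (fun l => G (false :: l)) (fun l => H _)).
    nra.
Qed.

Lemma Ek_ge_path p q k F : 0 <= p -> 0 <= q -> (forall l, 0 <= F l) ->
  p ^ k * F (repeat true k) <= Ek p q k F.
Proof.
  intros Hp Hq; revert F; induction k; intros F H.
  - rewrite Ek_0; simpl; lra.
  - rewrite Ek_S. simpl.
    assert (H1 := IHk (fun l => F (true :: l)) (fun l => H _)).
    assert (H2 := Ek_mono p q k (fun _ => 0) (fun l => F (false :: l)) Hp Hq (fun l => H _)).
    assert (E0 : Ek p q k (fun _ => 0) = 0).
    { transitivity (Ek p q k (fun l => 0 * 0)). apply Ek_ext; intros; ring.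
      rewrite (Ek_scal p q k 0 (fun _ => 0)); ring. }
    simpl in H1. nra.
Qed.

Definition dec (z A n m : nat) : option bool :=
  let lag := (Z.of_nat n - Z.of_nat m)%Z in
  if Z.leb (Z.of_nat A) lag then Some false
  else if andb (Nat.leb z n) (Z.leb lag (-1)) then Some true else None.

Lemma outcome_cons z A n m b l :
  attack_outcome z A n m (b :: l) =
  match dec z A (if b then S n else n) (if b then m else S m) with
  | Some r => Some r
  | None => attack_outcome z A (if b then S n else n) (if b then m else S m) l
  end.
Proof.
  destruct b; cbn -[Z.of_nat]; unfold dec;
  destruct (Z.leb _ _); auto; destruct (andb _ _); auto.
Qed.

Fixpoint endst (n m : nat) (l : list bool) : nat * nat :=
  match l with
  | nil => (n, m)
  | b :: l' => endst (if b then S n else n) (if b then m else S m) l'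
  end.

Lemma outcome_app z A n m l1 l2 r :
  attack_outcome z A n m l1 = Some r -> attack_outcome z A n m (l1 ++ l2) = Some r.
Proof.
  revert n m; induction l1 as [|b l1 IH]; intros n m H; [discriminate|].
  simpl app. rewrite outcome_cons in *.
  destruct (dec _ _ _ _); auto.
Qed.

Fixpoint Qf (p q : R) (j : nat) {struct j} : nat -> R :=
  match j with
  | O => fun D => match D with O => 0 | S _ => 1 - (q / p) ^ D end
  | S j' => fix g (D : nat) : R :=
      match D with O => 0 | S D' => p * Qf p q j' (S D') + q * g D' end
  end.

Lemma Qf_j0 p q j : Qf p q j 0 = 0.
Proof. destruct j; reflexivity. Qed.

Lemma Qf_rec p q j D : Qf p q (S j) D = p * Qf p q j D + q * Qf p q (S j) (D - 1).
Proof.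
  destruct D.
  - simpl Nat.sub. rewrite !Qf_j0. ring.
  - simpl Nat.sub. rewrite Nat.sub_0_r. reflexivity.
Qed.

Lemma Qf0S p q D : Qf p q 0 (S D) = 1 - (q / p) ^ (S D).
Proof. reflexivity. Qed.

Definition Wf p q z n m : R :=
  if Nat.leb z n then (if Nat.ltb n m then 1 else (q / p) ^ (n - m + 1))
  else 1 - Qf p q (z - n) (z + 1 - m).

Definition Vf p q z A n m : R :=
  (Wf p q z n m - (q / p) ^ (A + 1)) / (1 - (q / p) ^ (A + 1)).

Definition Ub p q z A n m : R :=
  match dec z A n m with
  | Some true => 1 | Some false => 0 | None => Vf p q z A n m end.

Lemma W_harm p q z A n m : p + q = 1 -> 0 < p -> (1 <= z)%nat -> (z <= A)%nat ->
  dec z A n m = None ->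
  Wf p q z n m = p * Wf p q z (S n) m + q * Wf p q z n (S m).
Proof.
  intros Hpq Hp Hz HzA. unfold dec, Wf.
  destruct (Z.leb_spec (Z.of_nat A) (Z.of_nat n - Z.of_nat m)); [discriminate|].
  destruct (Nat.leb_spec z n) as [Hzn|Hzn]; cbn [andb].
  - destruct (Z.leb_spec (Z.of_nat n - Z.of_nat m) (-1)); [discriminate|]. intros _.
    destruct (Nat.leb_spec z (S n)); [|lia].
    destruct (Nat.ltb_spec n m); [lia|].
    destruct (Nat.ltb_spec (S n) m); [lia|].
    destruct (Nat.ltb_spec n (S m)).
    + assert (n = m) by lia. subst. rewrite Nat.sub_diag.
      replace (S m - m + 1)%nat with 2%nat by lia. simpl. replace q with (1 - p) by lra. field. lra.
    + replace (S n - m + 1)%nat with ((n - S m) + 3)%nat by lia.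
      replace (n - m + 1)%nat with ((n - S m) + 2)%nat by lia.
      replace (n - S m + 1)%nat with ((n - S m) + 1)%nat by lia.
      rewrite !pow_add. simpl. replace q with (1 - p) by lra. field. lra.
  - intros _.
    destruct (z - n)%nat as [|j] eqn:Ej; [lia|].
    replace (z + 1 - S m)%nat with ((z + 1 - m) - 1)%nat by lia.
    rewrite (Qf_rec p q j).
    destruct (Nat.leb_spec z (S n)).
    + assert (j = 0%nat) by lia. subst j.
      destruct (Nat.ltb_spec (S n) m).
      * replace (z + 1 - m)%nat with 0%nat by lia. rewrite !Qf_j0.
        replace q with (1 - p) by lra. ring.
      * replace (z + 1 - m)%nat with (S (S n - m)) by lia.
        rewrite Qf0S. replace (S (S n - m)) with (S n - m + 1)%nat by lia.
        replace q with (1 - p) by lra. ring.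
    + replace (z - S n)%nat with j by lia. replace q with (1 - p) by lra. ring.
Qed.

Lemma pow_lt1 l e : 0 <= l < 1 -> 0 <= l ^ e <= 1.
Proof.
  intros H; split; [apply pow_le; lra|]. induction e; simpl; [lra|].
  assert (0 <= l ^ e) by (apply pow_le; lra). nra.
Qed.

Lemma V_harm p q z A n m : p + q = 1 -> 0 < p -> 0 < q -> q < p ->
  (1 <= z)%nat -> (z <= A)%nat ->
  dec z A n m = None ->
  Vf p q z A n m = p * Ub p q z A (S n) m + q * Ub p q z A n (S m).
Proof.
  intros Hpq Hp Hq Hqp Hz HzA Hd.
  assert (Hl : 0 <= q / p < 1).
  { split. apply Rlt_le, Rdiv_lt_0_compat; lra. apply (Rmult_lt_reg_r p); [lra|]. field_simplify; lra. }
  assert (Hc : (q / p) ^ (A + 1) < 1).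
  { replace (A + 1)%nat with (S A) by lia. simpl.
    assert (H1 := pow_lt1 (q/p) A Hl). nra. }
  assert (E1 : Ub p q z A (S n) m = Vf p q z A (S n) m).
  { revert Hd. unfold Ub, dec, Vf, Wf.
    destruct (Z.leb_spec (Z.of_nat A) (Z.of_nat n - Z.of_nat m)); [discriminate|].
    destruct (Z.leb_spec (Z.of_nat A) (Z.of_nat (S n) - Z.of_nat m)).
    - intros _. destruct (Nat.leb_spec z (S n)); [|lia].
      destruct (Nat.ltb_spec (S n) m); [lia|].
      replace (S n - m + 1)%nat with (A + 1)%nat by lia. field. lra.
    - destruct (Nat.leb_spec z (S n)); cbn [andb]; [|auto].
      destruct (Z.leb_spec (Z.of_nat (S n) - Z.of_nat m) (-1)); [|auto].
      intros _. destruct (Nat.ltb_spec (S n) m); [|lia]. field. lra. }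
  assert (E2 : Ub p q z A n (S m) = Vf p q z A n (S m)).
  { revert Hd. unfold Ub, dec, Vf, Wf.
    destruct (Z.leb_spec (Z.of_nat A) (Z.of_nat n - Z.of_nat m)); [discriminate|].
    destruct (Z.leb_spec (Z.of_nat A) (Z.of_nat n - Z.of_nat (S m))); [lia|].
    destruct (Nat.leb_spec z n); cbn [andb]; [|auto].
    destruct (Z.leb_spec (Z.of_nat n - Z.of_nat m) (-1)); [discriminate|].
    destruct (Z.leb_spec (Z.of_nat n - Z.of_nat (S m)) (-1)); [|auto].
    intros _. destruct (Nat.ltb_spec n (S m)); [|lia]. field. lra. }
  rewrite E1, E2. unfold Vf. rewrite (W_harm p q z A n m); auto. set (c := (q / p) ^ (A + 1)). set (w1 := Wf p q z (S n) m). set (w2 := Wf p q z n (S m)). replace q with (1 - p) by lra. field. apply Rgt_not_eq. unfold c; lra.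
Qed.

Definition Gv p q z A n m (l : list bool) : R :=
  match attack_outcome z A n m l with
  | Some true => 1 | Some false => 0
  | None => Vf p q z A (fst (endst n m l)) (snd (endst n m l)) end.

Lemma Gv_cons p q z A n m b l :
  Gv p q z A n m (b :: l) =
  match dec z A (if b then S n else n) (if b then m else S m) with
  | Some true => 1 | Some false => 0
  | None => Gv p q z A (if b then S n else n) (if b then m else S m) l end.
Proof.
  unfold Gv. rewrite outcome_cons. simpl endst.
  destruct (dec _ _ _ _) as [[|]|]; reflexivity.
Qed.

Lemma V_expect p q z A k : p + q = 1 -> 0 < p -> 0 < q -> q < p ->
  (1 <= z)%nat -> (z <= A)%nat -> forall n m,
  dec z A n m = None -> Vf p q z A n m = Ek p q k (Gv p q z A n m).
Proof.
  intros Hpq Hp Hq Hqp Hz HzA. induction k; intros n m Hd.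
  - rewrite Ek_0. reflexivity.
  - rewrite Ek_S. rewrite (V_harm p q z A n m); auto.
    assert (K : forall n' m', Ek p q k (Gv p q z A n' m') = Ek p q k (Gv p q z A n' m') -> 
       Ek p q k (fun l => match dec z A n' m' with
         | Some true => 1 | Some false => 0 | None => Gv p q z A n' m' l end)
       = Ub p q z A n' m').
    { intros n' m' _. unfold Ub. destruct (dec z A n' m') as [[|]|] eqn:E.
      - apply Ek_const; auto.
      - apply Ek_const; auto.
      - symmetry; apply IHk; auto. }
    rewrite <- (K (S n) m eq_refl), <- (K n (S m) eq_refl).
    f_equal; f_equal; apply Ek_ext; intros l; rewrite Gv_cons; reflexivity.
Qed.

Lemma Qf_bounds p q j D : p + q = 1 -> 0 < p -> 0 < q -> q < p ->
  0 <= Qf p q j D <= 1.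
Proof.
  intros Hpq Hp Hq Hqp.
  assert (Hl : 0 <= q / p < 1).
  { split. apply Rlt_le, Rdiv_lt_0_compat; lra. apply (Rmult_lt_reg_r p); [lra|].
    unfold Rdiv; rewrite Rmult_assoc, Rinv_l; lra. }
  revert D; induction j; intros D.
  - destruct D; [simpl; lra|]. rewrite Qf0S. pose proof (pow_lt1 _ (S D) Hl). lra.
  - induction D; [simpl; lra|]. 
    change (Qf p q (S j) (S D)) with (p * Qf p q j (S D) + q * Qf p q (S j) D).
    pose proof (IHj (S D)). nra.
Qed.

Lemma V_bound p q z A n m : p + q = 1 -> 0 < p -> 0 < q -> q < p ->
  Rabs (Vf p q z A n m) <= 1 / (1 - (q / p) ^ (A + 1)).
Proof.
  intros Hpq Hp Hq Hqp.
  assert (Hl : 0 <= q / p < 1).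
  { split. apply Rlt_le, Rdiv_lt_0_compat; lra. apply (Rmult_lt_reg_r p); [lra|].
    unfold Rdiv; rewrite Rmult_assoc, Rinv_l; lra. }
  assert (HW : 0 <= Wf p q z n m <= 1).
  { unfold Wf. destruct (Nat.leb z n); [destruct (Nat.ltb n m); [lra| apply pow_lt1; auto]|].
    pose proof (Qf_bounds p q (z - n) (z + 1 - m) Hpq Hp Hq Hqp). lra. }
  pose proof (pow_lt1 _ (A + 1) Hl) as Hc.
  assert (Hc1 : (q / p) ^ (A + 1) < 1).
  { replace (A + 1)%nat with (S A) by lia. simpl. pose proof (pow_lt1 _ A Hl). nra. }
  unfold Vf. set (c := (q / p) ^ (A + 1)) in *. set (w := Wf p q z n m) in *.
  unfold Rdiv. rewrite Rabs_mult, Rabs_inv. rewrite (Rabs_right (1 - c)) by lra.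
  apply Rmult_le_compat_r. left; apply Rinv_0_lt_compat; lra.
  apply Rabs_le; lra.
Qed.

Definition uk p q z A k n m : R :=
  Ek p q k (fun l => match attack_outcome z A n m l with None => 1 | Some _ => 0 end).

Lemma Ek_zero p q k : Ek p q k (fun _ => 0) = 0.
Proof.
  transitivity (Ek p q k (fun l => 0 * 0)). apply Ek_ext; intros; ring.
  rewrite (Ek_scal p q k 0 (fun _ => 0)); ring.
Qed.

Lemma uk_S p q z A k n m : uk p q z A (S k) n m =
  p * (match dec z A (S n) m with None => uk p q z A k (S n) m | Some _ => 0 end) +
  q * (match dec z A n (S m) with None => uk p q z A k n (S m) | Some _ => 0 end).
Proof.
  unfold uk. rewrite Ek_S. f_equal; f_equal.
  - destruct (dec z A (S n) m) eqn:E.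
    + transitivity (Ek p q k (fun _ => 0)); [|apply Ek_zero]. apply Ek_ext; intros l. rewrite outcome_cons, E. reflexivity.
    + apply Ek_ext; intros l. rewrite outcome_cons, E. reflexivity.
  - destruct (dec z A n (S m)) eqn:E.
    + transitivity (Ek p q k (fun _ => 0)); [|apply Ek_zero]. apply Ek_ext; intros l. rewrite outcome_cons, E. reflexivity.
    + apply Ek_ext; intros l. rewrite outcome_cons, E. reflexivity.
Qed.

Lemma uk_bounds p q z A k n m : p + q = 1 -> 0 <= p -> 0 <= q ->
  0 <= uk p q z A k n m <= 1.
Proof.
  intros Hpq Hp Hq. unfold uk. split.
  - apply Rle_trans with (Ek p q k (fun _ => 0)); [rewrite Ek_zero; lra|].
    apply Ek_mono; auto. intros l; destruct attack_outcome; lra.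
  - apply Rle_trans with (Ek p q k (fun _ => 1)); [|rewrite Ek_const; auto; lra].
    apply Ek_mono; auto. intros l; destruct attack_outcome; lra.
Qed.

Lemma uk_sub p q z A b S0 : p + q = 1 -> 0 <= p -> 0 <= q -> 0 <= S0 ->
  (forall n m, uk p q z A b n m <= S0) ->
  forall k n m, uk p q z A (k + b) n m <= S0 * uk p q z A k n m.
Proof.
  intros Hpq Hp Hq HS HB k. induction k; intros n m.
  - simpl. unfold uk at 2. rewrite Ek_0. simpl. specialize (HB n m). lra.
  - simpl (S k + b)%nat. rewrite !uk_S.
    destruct (dec z A (S n) m); destruct (dec z A n (S m));
    try pose proof (IHk (S n) m); try pose proof (IHk n (S m)); nra.
Qed.

Lemma honest_L1 z A j : forall n m,
  (Z.of_nat A <= Z.of_nat n - Z.of_nat m + Z.of_nat (S j))%Z ->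
  attack_outcome z A n m (repeat true (S j)) <> None.
Proof.
  induction j; intros n m H; simpl repeat; rewrite outcome_cons;
  destruct (dec z A (S n) m) eqn:E; try discriminate.
  - unfold dec in E. destruct (Z.leb_spec (Z.of_nat A) (Z.of_nat (S n) - Z.of_nat m)); [discriminate|]. lia.
  - apply IHj. lia.
Qed.

Lemma honest_L2 z A j : forall n m,
  (z <= n + S j)%nat ->
  (Z.of_nat n - Z.of_nat m + Z.of_nat (S j) <= -1)%Z ->
  attack_outcome z A n m (repeat true (S j)) <> None.
Proof.
  induction j; intros n m H1 H2; simpl repeat; rewrite outcome_cons;
  destruct (dec z A (S n) m) eqn:E; try discriminate.
  - unfold dec in E. destruct (Z.leb_spec (Z.of_nat A) (Z.of_nat (S n) - Z.of_nat m)); [discriminate|].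
    destruct (Nat.leb_spec z (S n)); [|lia].
    destruct (Z.leb_spec (Z.of_nat (S n) - Z.of_nat m) (-1)); [discriminate|]. lia.
  - apply IHj; lia.
Qed.

Lemma honest_decides z A n m : (1 <= z)%nat ->
  attack_outcome z A n m (repeat true (z + A)) <> None.
Proof.
  intros Hz.
  destruct (Z_le_gt_dec (Z.of_nat A) (Z.of_nat n - Z.of_nat m + Z.of_nat (z + A))).
  - replace (z + A)%nat with (S (z + A - 1)) in * by lia. apply honest_L1. lia.
  - rewrite repeat_app.
    assert (H := honest_L2 z A (z - 1) n m ltac:(lia) ltac:(lia)).
    replace (S (z - 1)) with z in H by lia.
    destruct (attack_outcome z A n m (repeat true z)) eqn:E; [|congruence].
    rewrite (outcome_app _ _ _ _ _ _ _ E). discriminate.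
Qed.

Lemma uk_T p q z A n m : p + q = 1 -> 0 <= p -> 0 <= q -> (1 <= z)%nat ->
  uk p q z A (z + A) n m <= 1 - p ^ (z + A).
Proof.
  intros Hpq Hp Hq Hz. unfold uk.
  set (sm := fun l => match attack_outcome z A n m l with None => 0 | Some _ => 1 end).
  transitivity (Ek p q (z + A) (fun l => 1 + (-1) * sm l)).
  { right. apply Ek_ext; intros l; unfold sm; destruct attack_outcome; ring. }
  rewrite Ek_plus, Ek_scal, Ek_const by auto.
  assert (H := Ek_ge_path p q (z + A) sm Hp Hq).
  assert (H1 : sm (repeat true (z + A)) = 1).
  { unfold sm. destruct (attack_outcome z A n m (repeat true (z + A))) eqn:E; auto.
    exfalso; apply (honest_decides z A n m Hz); auto. }
  rewrite H1 in H. assert (forall l, 0 <= sm l) by (intros l; unfold sm; destruct attack_outcome; lra).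
  specialize (H H0). lra.
Qed.

Lemma uk_geom p q z A : p + q = 1 -> 0 < p -> 0 < q -> (1 <= z)%nat ->
  forall j k n m, (j * (z + A) <= k)%nat ->
  uk p q z A k n m <= (1 - p ^ (z + A)) ^ j.
Proof.
  intros Hpq Hp Hq' Hz. assert (Hq : 0 <= q) by lra.
  set (T := (z + A)%nat). set (b := 1 - p ^ T).
  assert (Hb : 0 <= b <= 1).
  { unfold b. assert (0 < p ^ T) by (apply pow_lt; lra).
    assert (p ^ T <= 1) by (apply pow_lt1; lra). lra. }
  assert (G : forall j n m, uk p q z A (j * T) n m <= b ^ j).
  { induction j; intros n m.
    - simpl. unfold uk. rewrite Ek_0. simpl. lra.
    - change (S j * T)%nat with (T + j * T)%nat.
      assert (H := uk_sub p q z A (j * T) (b ^ j) Hpq (Rlt_le _ _ Hp) Hq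
                     (pow_le _ _ (proj1 Hb)) IHj T n m).
      assert (H2 := uk_T p q z A n m Hpq (Rlt_le _ _ Hp) Hq Hz). fold T b in H2.
      simpl. assert (0 <= b ^ j) by (apply pow_le; lra). nra. }
  intros j k n m Hk.
  replace k with ((k - j * T) + j * T)%nat by (unfold T in *; lia).
  assert (H := uk_sub p q z A (j * T) (b ^ j) Hpq (Rlt_le _ _ Hp) Hq
                 (pow_le _ _ (proj1 Hb)) (G j) (k - j * T) n m).
  assert (H2 := uk_bounds p q z A (k - j * T) n m Hpq (Rlt_le _ _ Hp) Hq).
  assert (0 <= b ^ j) by (apply pow_le; lra). nra.
Qed.

Lemma Ek_opp p q k F : - Ek p q k F = Ek p q k (fun l => - F l).
Proof.
  transitivity (-1 * Ek p q k F); [ring|]. rewrite <- Ek_scal. apply Ek_ext; intros; ring.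
Qed.

Lemma prob_limit p q z A : p + q = 1 -> 0 < p -> 0 < q -> q < p ->
  (1 <= z)%nat -> (z <= A)%nat ->
  is_lim_seq (fun k => attack_success_by p q z A k) (Vf p q z A 0 1).
Proof.
  intros Hpq Hp Hq Hqp Hz HzA.
  set (M := 1 / (1 - (q / p) ^ (A + 1))).
  assert (Hl : 0 <= q / p < 1).
  { split. apply Rlt_le, Rdiv_lt_0_compat; lra. apply (Rmult_lt_reg_r p); [lra|].
    unfold Rdiv; rewrite Rmult_assoc, Rinv_l; lra. }
  assert (HM : 0 < M).
  { unfold M. assert ((q / p) ^ (A + 1) < 1).
    { replace (A + 1)%nat with (S A) by lia. simpl. pose proof (pow_lt1 _ A Hl). nra. }
    apply Rdiv_lt_0_compat; lra. }
  assert (Hd : dec z A 0 1 = None).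
  { unfold dec. destruct (Z.leb_spec (Z.of_nat A) (Z.of_nat 0 - Z.of_nat 1)); [lia|].
    destruct (Nat.leb_spec z 0); [lia|]. reflexivity. }
  assert (Key : forall k, Rabs (attack_success_by p q z A k - Vf p q z A 0 1)
                          <= M * uk p q z A k 0 1).
  { intros k. rewrite (V_expect p q z A k Hpq Hp Hq Hqp Hz HzA 0 1 Hd).
    set (sc := fun l => match attack_outcome z A 0 1 l with Some true => 1 | _ => 0 end).
    change (attack_success_by p q z A k) with (Ek p q k sc).
    assert (E : Ek p q k sc - Ek p q k (Gv p q z A 0 1) =
                Ek p q k (fun l => sc l + (-1) * Gv p q z A 0 1 l)).
    { rewrite Ek_plus, Ek_scal. ring. }
    rewrite E. unfold uk. rewrite <- Ek_scal. apply Rabs_le. split.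
    - rewrite Ek_opp. apply Ek_mono; try lra. intros l.
      unfold sc, Gv. destruct (attack_outcome z A 0 1 l) as [[|]|]; try lra.
      pose proof (V_bound p q z A (fst (endst 0 1 l)) (snd (endst 0 1 l)) Hpq Hp Hq Hqp) as HV.
      fold M in HV. apply Rabs_le_between in HV. lra.
    - apply Ek_mono; try lra. intros l.
      unfold sc, Gv. destruct (attack_outcome z A 0 1 l) as [[|]|]; try lra.
      pose proof (V_bound p q z A (fst (endst 0 1 l)) (snd (endst 0 1 l)) Hpq Hp Hq Hqp) as HV.
      fold M in HV. apply Rabs_le_between in HV. lra. }
  apply is_lim_seq_spec. intros eps.
  set (b := 1 - p ^ (z + A)).
  assert (Hb : Rabs b < 1).
  { unfold b. assert (0 < p ^ (z + A)) by (apply pow_lt; lra).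
    assert (p ^ (z + A) <= 1) by (apply pow_lt1; lra). rewrite Rabs_right; lra. }
  destruct (pow_lt_1_zero b Hb (eps / M)) as [N HN].
  { apply Rdiv_lt_0_compat; [apply cond_pos|lra]. }
  exists (N * (z + A))%nat. intros k Hk.
  eapply Rle_lt_trans; [apply Key|].
  assert (H1 := uk_geom p q z A Hpq Hp Hq Hz N k 0 1 Hk). fold b in H1.
  specialize (HN N (le_n _)). rewrite Rabs_right in HN.
  2: { apply Rle_ge, pow_le. unfold b. assert (p ^ (z + A) <= 1) by (apply pow_lt1; lra).
       assert (0 < p ^ (z + A)) by (apply pow_lt; lra). lra. }
  apply Rle_lt_trans with (M * b ^ N).
  - apply Rmult_le_compat_l; lra.
  - apply (Rmult_lt_reg_r (/ M)). apply Rinv_0_lt_compat; lra.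
    replace (M * b ^ N * / M) with (b ^ N) by (field; lra).
    replace (pos eps * / M) with (eps / M) by (unfold Rdiv; auto). lra.
Qed.

Definition cf (j k : nat) : R :=
  INR (fact (j + k)) / (INR (fact j) * INR (fact k)).

Lemma INR_fact_pos n : 0 < INR (fact n).
Proof. apply lt_0_INR, lt_O_fact. Qed.

Lemma cf_j0 j : cf j 0 = 1.
Proof. unfold cf. rewrite Nat.add_0_r. simpl. field. apply Rgt_not_eq, INR_fact_pos. Qed.

Lemma cf_0k k : cf 0 k = 1.
Proof. unfold cf. simpl. field. apply Rgt_not_eq, INR_fact_pos. Qed.

Lemma cf_pascal j k : cf (S j) (S k) = cf j (S k) + cf (S j) k.
Proof.
  unfold cf.
  replace (S j + S k)%nat with (S (S (j + k))) by lia.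
  replace (j + S k)%nat with (S (j + k)) by lia.
  replace (S j + k)%nat with (S (j + k)) by lia.
  rewrite !(fact_simpl (S (j + k))), !fact_simpl, !mult_INR, !S_INR, plus_INR.
  pose proof (INR_fact_pos j). pose proof (INR_fact_pos k). pose proof (INR_fact_pos (j + k)).
  pose proof (pos_INR j). pose proof (pos_INR k).
  field. repeat split; apply Rgt_not_eq; lra.
Qed.

Lemma cf_shift j N : INR (S N) * cf j (S N) = INR (S j) * cf (S j) N.
Proof.
  unfold cf. replace (S j + N)%nat with (j + S N)%nat by lia.
  rewrite !(fact_simpl N), !fact_simpl, !mult_INR.
  pose proof (INR_fact_pos j). pose proof (INR_fact_pos N).
  pose proof (pos_INR j). pose proof (pos_INR N). rewrite !S_INR.
  field. repeat split; apply Rgt_not_eq; lra.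
Qed.

Fixpoint sumn (N : nat) (f : nat -> R) : R :=
  match N with O => 0 | S N' => sumn N' f + f N' end.

Lemma sumn_ext N f g : (forall k, (k < N)%nat -> f k = g k) -> sumn N f = sumn N g.
Proof.
  induction N; intros H; simpl; auto. rewrite IHN, H; auto.
Qed.

Lemma sumn_plus N f g : sumn N (fun k => f k + g k) = sumn N f + sumn N g.
Proof. induction N; simpl; [ring|rewrite IHN; ring]. Qed.

Lemma sumn_scal N c f : sumn N (fun k => c * f k) = c * sumn N f.
Proof. induction N; simpl; [ring|rewrite IHN; ring]. Qed.

Lemma sumn_shift N f : sumn (S N) f = f 0%nat + sumn N (fun k => f (S k)).
Proof. induction N; simpl in *; [ring|rewrite IHN; ring]. Qed.

Definition Qc p q j D : R :=
  sumn D (fun k => cf j k * p ^ (S j) * q ^ k * (1 - (q / p) ^ (D - k))).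

Lemma Qf_closed p q j D : Qf p q (S j) D = Qc p q j D.
Proof.
  revert D; induction j; intros D.
  - induction D; [reflexivity|].
    change (Qf p q 1 (S D)) with (p * Qf p q 0 (S D) + q * Qf p q 1 D).
    rewrite IHD, Qf0S. unfold Qc. rewrite sumn_shift, cf_0k.
    rewrite <- sumn_scal, Nat.sub_0_r.
    f_equal; [ring|]. apply sumn_ext; intros k Hk. rewrite !cf_0k.
    replace (S D - S k)%nat with (D - k)%nat by lia. simpl. ring.
  - induction D; [reflexivity|].
    change (Qf p q (S (S j)) (S D)) with (p * Qf p q (S j) (S D) + q * Qf p q (S (S j)) D).
    rewrite IHD, IHj. unfold Qc. rewrite !sumn_shift, !cf_j0.
    rewrite <- !sumn_scal.
    transitivity (1 * p ^ S (S j) * q ^ 0 * (1 - (q / p) ^ (S D - 0)) +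
      (sumn D (fun k => cf j (S k) * p ^ S (S j) * q ^ S k * (1 - (q / p) ^ (S D - S k))) +
       sumn D (fun k => cf (S j) k * p ^ S (S j) * q ^ S k * (1 - (q / p) ^ (S D - S k))))).
    + rewrite Rmult_plus_distr_l, <- sumn_scal.
      replace (sumn D (fun k => q * (cf (S j) k * p ^ S (S j) * q ^ k * (1 - (q / p) ^ (D - k)))))
        with (sumn D (fun k => cf (S j) k * p ^ S (S j) * q ^ S k * (1 - (q / p) ^ (S D - S k))))
        by (apply sumn_ext; intros; replace (S D - S k)%nat with (D - k)%nat by lia; simpl; ring).
      replace (sumn D (fun k => p * (cf j (S k) * p ^ S j * q ^ S k * (1 - (q / p) ^ (S D - S k)))))
        with (sumn D (fun k => cf j (S k) * p ^ S (S j) * q ^ S k * (1 - (q / p) ^ (S D - S k))))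
        by (apply sumn_ext; intros; simpl; ring).
      simpl; ring.
    + rewrite <- sumn_plus. f_equal. apply sumn_ext; intros k Hk. rewrite cf_pascal. ring.
Qed.

Definition fj (j N : nat) (x : R) : R :=
  sumn N (fun k => cf j k * (1 - x) ^ (S j) * x ^ k).

Lemma sumn_minus N f g : sumn N (fun k => f k - g k) = sumn N f - sumn N g.
Proof. induction N; simpl; [ring|rewrite IHN; ring]. Qed.

Lemma Qf_zz p q j : p = 1 - q -> 0 < p ->
  Qf p q (S j) (S j) = fj j (S j) q - fj j (S j) p.
Proof.
  intros Hp Hp0. rewrite Qf_closed. unfold Qc, fj. rewrite <- sumn_minus.
  apply sumn_ext; intros k Hk.
  replace (1 - q) with p by lra. replace (1 - p) with q by lra.
  set (e := (S j - k)%nat). replace (S j) with (k + e)%nat by (unfold e; lia).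
  rewrite !pow_add. unfold Rdiv. rewrite Rpow_mult_distr, pow_inv.
  field. apply pow_nonzero; lra.
Qed.

Lemma fj_deriv j N (x : R) :
  is_derive (fj j (S N)) x (- INR (S j) * (1 - x) ^ j * cf (S j) N * x ^ N).
Proof.
  induction N.
  - unfold fj. simpl sumn.
    apply (is_derive_ext (fun x => cf j 0 * (1 - x) ^ S j)); [intros; simpl; ring|].
    auto_derive; auto. rewrite cf_j0, cf_j0.
    change (match j with 0%nat => 1 | S _ => INR j + 1 end) with (INR (S j)).
    replace (1 + - x) with (1 - x) by ring. simpl. ring.
  - apply (is_derive_ext (fun x => fj j (S N) x + cf j (S N) * (1 - x) ^ S j * x ^ S N));
      [intros; reflexivity|].
    assert (Ht : is_derive (fun x => cf j (S N) * (1 - x) ^ S j * x ^ S N) x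
       (cf j (S N) * (- INR (S j) * (1 - x) ^ j * x ^ S N + (1 - x) ^ S j * (INR (S N) * x ^ N)))).
    { auto_derive; auto.
      change (match j with 0%nat => 1 | S _ => INR j + 1 end) with (INR (S j)).
      change (match N with 0%nat => 1 | S _ => INR N + 1 end) with (INR (S N)).
      replace (1 + - x) with (1 - x) by ring. simpl. ring. }
    assert (H := is_derive_plus _ _ x _ _ IHN Ht). simpl in H.
    replace (- INR (S j) * (1 - x) ^ j * cf (S j) (S N) * x ^ S N) with
      (plus (- INR (S j) * (1 - x) ^ j * cf (S j) N * x ^ N)
        (cf j (S N) * (- INR (S j) * (1 - x) ^ j * x ^ S N + (1 - x) ^ S j * (INR (S N) * x ^ N)))).
    + exact H.
    + unfold plus; simpl. rewrite cf_pascal.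
      assert (Hs := cf_shift j N).
      assert (Ha : cf j (S N) = INR (S j) * cf (S j) N / INR (S N)).
      { rewrite <- Hs. field. apply Rgt_not_eq, lt_0_INR; lia. }
      rewrite Ha. change (match j with 0%nat => 1 | S _ => INR j + 1 end) with (INR (S j)) in *. change (match N with 0%nat => 1 | S _ => INR N + 1 end) with (INR (S N)). field. apply Rgt_not_eq, lt_0_INR; lia.
Qed.

Definition Tz (j : nat) (x : R) : R := 1 - fj j (S j) x + fj j (S j) (1 - x).

Lemma is_derive_eq (f : R -> R) (x l l' : R) : is_derive f x l -> l = l' -> is_derive f x l'.
Proof. intros H <-; exact H. Qed.

Lemma Tz_deriv j (x : R) :
  is_derive (Tz j) x (2 * INR (S j) * cf (S j) j * (x * (1 - x)) ^ j).
Proof.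
  unfold Tz.
  assert (H1 := fj_deriv j j x).
  assert (H3 : is_derive (fun x => fj j (S j) (1 - x)) x
     (scal (-1) (- INR (S j) * (1 - (1 - x)) ^ j * cf (S j) j * (1 - x) ^ j))).
  { apply (is_derive_comp (fj j (S j)) (fun x => 1 - x)); auto.
    apply fj_deriv. auto_derive; auto; ring. }
  assert (H4 := is_derive_minus (fun _ : R => 1) (fj j (S j)) x _ _ (is_derive_const 1 x) H1).
  assert (H := is_derive_plus _ _ x _ _ H4 H3).
  eapply is_derive_eq; [apply H|].
  unfold plus, minus, scal, opp, zero, mult; simpl. unfold plus, mult, opp, zero; simpl.
  change (match j with 0%nat => 1 | S _ => INR j + 1 end) with (INR (S j)) in *.
  replace (1 - (1 - x)) with x by ring. rewrite Rpow_mult_distr. ring.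
Qed.

Definition sfun (t : R) : R := (1 - sqrt (1 - t)) / 2.

Definition Kc (j : nat) : R := 2 * INR (S j) * cf (S j) j.

Lemma Kc_pos j : 0 < Kc j.
Proof.
  unfold Kc, cf. pose proof (INR_fact_pos (S j + j)). pose proof (INR_fact_pos (S j)).
  pose proof (INR_fact_pos j). assert (0 < INR (S j)) by (apply lt_0_INR; lia).
  apply Rmult_lt_0_compat; [lra|]. apply Rdiv_lt_0_compat; nra.
Qed.

Lemma Phi_deriv j (t : R) : t < 1 ->
  is_derive (fun t => Tz j (sfun t)) t (Kc j / 4 ^ (S j) * (t ^ j / sqrt (1 - t))).
Proof.
  intros Ht.
  assert (Hs : is_derive sfun t (/ (4 * sqrt (1 - t)))).
  { unfold sfun. auto_derive; [lra|].
    assert (0 < sqrt (1 - t)) by (apply sqrt_lt_R0; lra). replace (1 + - t) with (1 - t) by ring. field. lra. }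
  assert (H := is_derive_comp (Tz j) sfun t _ _ (Tz_deriv j (sfun t)) Hs).
  eapply is_derive_eq; [apply H|].
  unfold scal; simpl; unfold mult; simpl.
  assert (Hr : 0 < sqrt (1 - t)) by (apply sqrt_lt_R0; lra).
  assert (E : sfun t * (1 - sfun t) = t / 4).
  { unfold sfun. assert (H2 := pow2_sqrt (1 - t)). 
    replace ((1 - sqrt (1 - t)) / 2 * (1 - (1 - sqrt (1 - t)) / 2)) with ((1 - sqrt (1 - t) ^ 2) / 4) by (simpl; field).
    rewrite H2 by lra. field. }
  rewrite E. unfold Rdiv. rewrite Rpow_mult_distr, pow_inv. unfold Kc. simpl (4 ^ S j).
  change (match j with 0%nat => 1 | S _ => INR j + 1 end) with (INR (S j)) in *. field. split; [lra|]. apply pow_nonzero; lra.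
Qed.

Lemma fj_at0 j N : fj j (S N) 0 = 1.
Proof.
  unfold fj. replace (1 - 0) with 1 by ring. rewrite pow1.
  induction N.
  - simpl. rewrite cf_j0. ring.
  - change (sumn (S (S N)) (fun k => cf j k * 1 * 0 ^ k))
      with (sumn (S N) (fun k => cf j k * 1 * 0 ^ k) + cf j (S N) * 1 * 0 ^ (S N)).
    rewrite IHN. simpl. ring.
Qed.

Lemma fj_at1 j N : fj j N 1 = 0.
Proof.
  unfold fj. replace (1 - 1) with 0 by ring. induction N; [reflexivity|].
  change (sumn (S N) (fun k => cf j k * 0 ^ S j * 1 ^ k))
    with (sumn N (fun k => cf j k * 0 ^ S j * 1 ^ k) + cf j N * 0 ^ S j * 1 ^ N).
  rewrite IHN. simpl. ring.
Qed.

Lemma Tz_at0 j : Tz j (sfun 0) = 0.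
Proof.
  unfold sfun. replace (1 - 0) with 1 by ring. rewrite sqrt_1.
  replace ((1 - 1) / 2) with 0 by field. unfold Tz. replace (1 - 0) with 1 by ring.
  rewrite fj_at0, fj_at1. ring.
Qed.

Lemma J_value j x : 0 <= x < 1 ->
  is_RInt (fun t => t ^ j / sqrt (1 - t)) 0 x (4 ^ (S j) / Kc j * Tz j (sfun x)).
Proof.
  intros Hx.
  assert (HK := Kc_pos j).
  assert (H := is_RInt_derive (fun t => 4 ^ (S j) / Kc j * Tz j (sfun t))
                 (fun t => t ^ j / sqrt (1 - t)) 0 x).
  rewrite Rmin_left, Rmax_right in H by lra.
  assert (E : minus (4 ^ (S j) / Kc j * Tz j (sfun x)) (4 ^ (S j) / Kc j * Tz j (sfun 0))
              = 4 ^ (S j) / Kc j * Tz j (sfun x)).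
  { rewrite Tz_at0. unfold minus, plus, opp; simpl. ring. }
  rewrite <- E. apply H.
  - intros t Ht.
    assert (H1 := is_derive_scal _ t (4 ^ (S j) / Kc j) _ (Phi_deriv j t ltac:(lra))).
    eapply is_derive_eq; [apply H1|]. field. assert (0 < sqrt (1 - t)) by (apply sqrt_lt_R0; lra). split; [lra|]. split; [apply pow_nonzero; lra|lra].
  - intros t Ht. apply (@ex_derive_continuous R_AbsRing R_NormedModule). auto_derive.
    assert (0 < sqrt (1 - t)) by (apply sqrt_lt_R0; lra).
    replace (1 + - t) with (1 - t) by ring. repeat split; lra.
Qed.

Lemma sfun_4pq q : 0 < q < 1 / 2 -> sfun (4 * (1 - q) * q) = q.
Proof.
  intros Hq. unfold sfun.
  replace (1 - 4 * (1 - q) * q) with ((1 - 2 * q) ^ 2) by ring.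
  rewrite sqrt_pow2 by lra. field.
Qed.

Lemma Tz_Qf q j : 0 < q < 1 ->
  Tz j q = 1 - Qf (1 - q) q (S j) (S j).
Proof.
  intros Hq. rewrite (Qf_zz (1 - q) q j) by lra. unfold Tz. ring.
Qed.

Lemma beta_RInt j q : 0 < q < 1 / 2 ->
  RInt (fun t => Rpower t (INR (S j) - 1) * Rpower (1 - t) (1 / 2 - 1)) 0 (4 * (1 - q) * q)
  = 4 ^ (S j) / Kc j * (1 - Qf (1 - q) q (S j) (S j)).
Proof.
  intros Hq. apply is_RInt_unique.
  assert (Hx : 0 <= 4 * (1 - q) * q < 1).
  { split. nra. replace (4 * (1 - q) * q) with (1 - (1 - 2 * q) ^ 2) by ring.
    assert (0 < (1 - 2 * q) ^ 2) by (apply pow_lt; lra). lra. }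
  assert (H := J_value j _ Hx). rewrite sfun_4pq, Tz_Qf in H by lra.
  eapply is_RInt_ext; [|apply H].
  rewrite Rmin_left, Rmax_right by lra. intros t Ht.
  replace (INR (S j) - 1) with (INR j) by (rewrite S_INR; ring).
  rewrite Rpower_pow by lra.
  replace (1 / 2 - 1) with (- (/ 2)) by field.
  rewrite Rpower_Ropp, Rpower_sqrt by lra. reflexivity.
Qed.

Lemma ball_R (y x : R) (eps : posreal) : Rabs (x - y) < eps -> ball y eps x.
Proof. intros H. exact H. Qed.

Lemma at_right_0 (P : R -> Prop) (d : posreal) : (forall t, 0 < t < d -> P t) -> at_right 0 P.
Proof.
  intros H. exists d. intros t Ht Hp. apply H. split; auto.
  unfold ball in Ht; simpl in Ht; unfold AbsRing_ball in Ht.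
  unfold abs, minus, plus, opp in Ht; simpl in Ht.
  rewrite Rabs_right in Ht; lra.
Qed.

Lemma pinf (P : R -> Prop) (M : R) : (forall t, M < t -> P t) -> Rbar_locally p_infty P.
Proof. intros H. exists M. auto. Qed.

Lemma exp_ge_pow (x : R) (n : nat) : 0 <= x -> x ^ n / INR (fact n) <= exp x.
Proof.
  intros Hx. destruct n.
  - simpl. assert (H := exp_ge_taylor x 0 Hx). simpl in H. lra.
  - assert (H := exp_ge_taylor x (S n) Hx). simpl in H.
    assert (0 <= sum_f_R0 (fun k => x ^ k / INR (fact k)) n).
    { apply cond_pos_sum. intros k. apply Rmult_le_pos. apply pow_le; auto.
      apply Rlt_le, Rinv_0_lt_compat, lt_0_INR, lt_O_fact. }
    simpl. lra.
Qed.

Lemma bnd_lim0 (s : R) : 0 < s ->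
  filterlim (fun t => Rpower t s * exp (- t)) (at_right 0) (locally 0).
Proof.
  intros Hs. apply filterlim_locally. intros eps.
  assert (Hd : 0 < Rpower eps (/ s)) by (unfold Rpower; apply exp_pos).
  apply (at_right_0 _ (mkposreal _ Hd)). intros t [Ht1 Ht2]. simpl in Ht2.
  apply ball_R. rewrite Rminus_0_r.
  assert (H1 : Rpower t s < eps).
  { replace (pos eps) with (Rpower (Rpower eps (/ s)) s).
    apply Rlt_Rpower_l; auto.
    rewrite Rpower_mult. replace (/ s * s) with 1 by (field; lra).
    apply Rpower_1, cond_pos. }
  assert (H2 : 0 < exp (- t) <= 1).
  { split. apply exp_pos. rewrite <- exp_0. apply exp_le_3 || (left; apply exp_increasing; lra). }
  assert (0 < Rpower t s) by (unfold Rpower; apply exp_pos).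
  rewrite Rabs_right by nra. nra.
Qed.

Lemma bnd_liminf (s : R) : 0 < s ->
  filterlim (fun t => Rpower t s * exp (- t)) (Rbar_locally p_infty) (locally 0).
Proof.
  intros Hs. apply filterlim_locally. intros eps.
  set (n := Z.to_nat (up s)).
  assert (Hn : s <= INR n).
  { destruct (archimed s) as [H1 H2]. unfold n.
    rewrite INR_IZR_INZ, Z2Nat.id. lra.
    apply le_IZR. lra. }
  set (F := INR (fact (S n))).
  assert (HF : 0 < F) by (apply lt_0_INR, lt_O_fact).
  apply (pinf _ (Rmax 1 (F / eps))). intros t Ht.
  assert (Ht1 : 1 < t) by (eapply Rle_lt_trans; [apply Rmax_l|apply Ht]).
  assert (Ht2 : F / eps < t) by (eapply Rle_lt_trans; [apply Rmax_r|apply Ht]).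
  apply ball_R. rewrite Rminus_0_r.
  assert (H1 : Rpower t s <= t ^ n).
  { rewrite <- Rpower_pow by lra. apply Rle_Rpower; lra. }
  assert (H2 : t ^ S n / F <= exp t) by (apply exp_ge_pow; lra).
  assert (Htn : 0 < t ^ n) by (apply pow_lt; lra).
  assert (H3 : exp (- t) <= F / t ^ S n).
  { rewrite exp_Ropp. apply (Rmult_le_reg_r (exp t)). apply exp_pos.
    rewrite Rinv_l by (apply Rgt_not_eq, exp_pos).
    apply (Rmult_le_reg_l (t ^ S n / F)). apply Rdiv_lt_0_compat; [apply pow_lt; lra|lra].
    replace (t ^ S n / F * (F / t ^ S n * exp t)) with (exp t).
    lra. field. split; [|lra]. apply pow_nonzero; lra. }
  assert (0 < Rpower t s) by (unfold Rpower; apply exp_pos).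
  assert (0 < exp (- t)) by apply exp_pos.
  rewrite Rabs_right by nra.
  apply Rle_lt_trans with (t ^ n * (F / t ^ S n)).
  { apply Rmult_le_compat; lra. }
  replace (t ^ n * (F / t ^ S n)) with (F / t) by (simpl; field; lra).
  apply (Rmult_lt_reg_r t); [lra|]. unfold Rdiv. rewrite Rmult_assoc, Rinv_l by lra.
  apply (Rmult_lt_reg_r (/ eps)). apply Rinv_0_lt_compat, cond_pos.
  replace (eps * t * / eps) with t by (field; apply Rgt_not_eq, cond_pos). lra.
Qed.

Definition FA := at_right 0.
Definition FB := Rbar_locally p_infty.

Lemma FP (P : R * R -> Prop) : (forall a b, 0 < a -> 0 < b -> P (a, b)) ->
  filter_prod (at_right 0) (Rbar_locally p_infty) P.
Proof.
  intros HP. apply Filter_prod with (fun a => 0 < a) (fun b => 0 < b).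
  - apply (at_right_0 _ (mkposreal 1 Rlt_0_1)). intros t Ht; lra.
  - apply (pinf _ 0). auto.
  - intros; apply HP; auto.
Qed.

Lemma between_pos a b x : 0 < a -> 0 < b -> Rmin a b <= x <= Rmax a b -> 0 < x.
Proof.
  intros Ha Hb Hx. assert (0 < Rmin a b) by (apply Rmin_case; auto). lra.
Qed.

Lemma AD (H h : R -> R) (L0 L1 : R) :
  (forall t, 0 < t -> is_derive H t (h t)) -> (forall t, 0 < t -> continuous h t) ->
  filterlim H (at_right 0) (locally L0) -> filterlim H (Rbar_locally p_infty) (locally L1) ->
  is_RInt_gen h (at_right 0) (Rbar_locally p_infty) (L1 - L0).
Proof.
  intros Hd Hc H0 H1.
  apply (is_RInt_gen_ext (Derive H)).
  - apply FP. intros a b Ha Hb x Hx. simpl in Hx.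
    assert (0 < x) by (apply (between_pos a b x); auto; lra).
    apply is_derive_unique, Hd; auto.
  - apply is_RInt_gen_Derive; auto.
    + apply FP. intros a b Ha Hb x Hx. simpl in Hx.
      assert (0 < x) by (apply (between_pos a b x); auto).
      eexists; apply Hd; auto.
    + apply FP. intros a b Ha Hb x Hx. simpl in Hx.
      assert (Hx0 : 0 < x) by (apply (between_pos a b x); auto).
      apply (continuous_ext_loc _ h).
      * exists (mkposreal x Hx0). intros y Hy.
        assert (0 < y).
        { unfold ball in Hy; simpl in Hy; unfold AbsRing_ball in Hy.
          unfold abs, minus, plus, opp in Hy; simpl in Hy.
          apply Rabs_lt_between in Hy. lra. }
        symmetry; apply is_derive_unique, Hd; auto.
      * apply Hc; auto.
Qed.

Definition gi (s t : R) : R := Rpower t (s - 1) * exp (- t).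

Lemma Rpower_m1 t s : 0 < t -> Rpower t (s - 1) = Rpower t s / t.
Proof.
  intros Ht. unfold Rminus. rewrite Rpower_plus, Rpower_Ropp, Rpower_1 by auto.
  unfold Rdiv; auto.
Qed.

Lemma IBP s l : 0 < s ->
  is_RInt_gen (gi s) (at_right 0) (Rbar_locally p_infty) l ->
  is_RInt_gen (gi (s + 1)) (at_right 0) (Rbar_locally p_infty) (s * l).
Proof.
  intros Hs Hl.
  set (h := fun t => exp (s * ln t) * (s / t) * exp (- t) - exp (s * ln t) * exp (- t)).
  assert (HA : is_RInt_gen h (at_right 0) (Rbar_locally p_infty) (0 - 0)).
  { apply (AD (fun t => Rpower t s * exp (- t))).
    - intros t Ht. unfold h, Rpower. auto_derive; auto. field. lra.
    - intros t Ht. apply (@ex_derive_continuous R_AbsRing R_NormedModule).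
      unfold h. auto_derive. repeat split; lra.
    - apply bnd_lim0; auto.
    - apply bnd_liminf; auto. }
  assert (HB := is_RInt_gen_scal _ s _ Hl).
  assert (HC := is_RInt_gen_minus _ _ _ _ HB HA).
  replace (s * l) with (minus (scal s l) (0 - 0)).
  2: { unfold minus, scal, plus, opp; simpl. unfold mult; simpl. ring. }
  eapply is_RInt_gen_ext; [|apply HC].
  apply FP. intros a b Ha Hb x Hx. simpl in Hx.
  assert (Hx0 : 0 < x) by (apply (between_pos a b x); auto; lra).
  unfold h, gi, minus, scal, plus, opp; simpl. unfold mult; simpl.
  replace (s + 1 - 1) with s by ring. rewrite Rpower_m1 by auto.
  unfold Rpower. field. lra.
Qed.

Lemma Gamma1 : is_RInt_gen (gi 1) (at_right 0) (Rbar_locally p_infty) 1.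
Proof.
  replace 1 with (0 - (- 1)) at 2 by ring.
  eapply is_RInt_gen_ext.
  2: apply (AD (fun t => - exp (- t)) (fun t => exp (- t))).
  - apply FP. intros a b Ha Hb x Hx. unfold gi. replace (1 - 1) with 0 by ring.
    unfold Rpower. rewrite Rmult_0_l, exp_0. symmetry; apply Rmult_1_l.
  - intros t Ht. auto_derive; auto. ring.
  - intros t Ht. apply (@ex_derive_continuous R_AbsRing R_NormedModule). auto_derive; auto.
  - apply filterlim_locally. intros eps.
    assert (Hc : continuous (fun t => - exp (- t)) 0).
    { apply (@ex_derive_continuous R_AbsRing R_NormedModule). auto_derive; auto. }
    replace (-1) with (- exp (- 0)) by (rewrite Ropp_0, exp_0; ring).
    apply (filter_le_within (F := locally 0) (fun u => 0 < u)).
    apply Hc. apply locally_ball.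
  - apply filterlim_locally. intros eps.
    apply (pinf _ (- ln eps)). intros t Ht. apply ball_R.
    rewrite Rminus_0_r, Rabs_Ropp, Rabs_right by (left; apply exp_pos).
    rewrite <- (exp_ln eps) by apply cond_pos. apply exp_increasing. lra.
Qed.

Lemma exR (f : R -> R) a b : 0 < a -> 0 < b -> (forall t, 0 < t -> continuous f t) -> ex_RInt f a b.
Proof.
  intros Ha Hb Hc. apply (@ex_RInt_continuous R_CompleteNormedModule).
  intros z Hz. apply Hc. apply (between_pos a b z); auto.
Qed.

Lemma MB (f : R -> R) (B : R) :
  (forall t, 0 < t -> continuous f t) -> (forall t, 0 < t -> 0 <= f t) ->
  (forall a b, 0 < a -> a < b -> RInt f a b <= B) ->
  exists l, is_RInt_gen f (at_right 0) (Rbar_locally p_infty) l /\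
            (forall a b, 0 < a -> a < b -> RInt f a b <= l).
Proof.
  intros Hc Hp HB.
  set (E := fun y => exists a b, 0 < a /\ a < b /\ y = RInt f a b).
  assert (Hb : bound E).
  { exists B. intros y [a [b [Ha [Hab ->]]]]. apply HB; auto. }
  assert (He : exists y, E y).
  { exists (RInt f 1 2). exists 1, 2. repeat split; lra. }
  destruct (completeness E Hb He) as [l [Hub Hlub]].
  assert (Hup : forall a b, 0 < a -> a < b -> RInt f a b <= l).
  { intros a b Ha Hab. apply Hub. exists a, b. auto. }
  exists l. split; auto.
  intros P [eps Heps].
  assert (Hex : exists a0 b0, 0 < a0 /\ a0 < b0 /\ l - eps < RInt f a0 b0).
  { apply Classical_Prop.NNPP. intros Hn.
    assert (Hu : is_upper_bound E (l - eps)).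
    { intros y [a [b [Ha [Hab ->]]]]. apply Rnot_lt_le. intros Hlt.
      apply Hn. exists a, b. auto. }
    specialize (Hlub _ Hu). destruct eps as [e He']; simpl in *. lra. }
  destruct Hex as [a0 [b0 [Ha0 [Hab0 Hl0]]]].
  apply Filter_prod with (fun a => 0 < a < a0) (fun b => b0 < b).
  - apply (at_right_0 _ (mkposreal a0 Ha0)). auto.
  - apply (pinf _ b0). auto.
  - intros a b [Ha Ha'] Hb'. simpl.
    exists (RInt f a b). split.
    + apply (RInt_correct (V := R_CompleteNormedModule)), exR; auto; lra.
    + apply Heps. apply ball_R.
      assert (H1 : RInt f a b <= l) by (apply Hup; lra).
      assert (E1 := RInt_Chasles f a a0 b (exR f a a0 Ha Ha0 Hc) (exR f a0 b Ha0 ltac:(lra) Hc)).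
      assert (E2 := RInt_Chasles f a0 b0 b (exR f a0 b0 Ha0 ltac:(lra) Hc) (exR f b0 b ltac:(lra) ltac:(lra) Hc)).
      assert (P1 : 0 <= RInt f a a0).
      { apply RInt_ge_0; [lra| apply exR; auto|]. intros x Hx; apply Hp; lra. }
      assert (P2 : 0 <= RInt f b0 b).
      { apply RInt_ge_0; [lra| apply exR; auto; lra|]. intros x Hx; apply Hp; lra. }
      unfold plus in E1, E2; simpl in E1, E2.
      rewrite Rabs_left1 by lra. lra.
Qed.

Lemma gi_cont s t : 0 < t -> continuous (gi s) t.
Proof.
  intros Ht. apply (@ex_derive_continuous R_AbsRing R_NormedModule).
  unfold gi, Rpower. auto_derive. auto.
Qed.

Lemma gi_pos s t : 0 < gi s t.
Proof. unfold gi, Rpower. apply Rmult_lt_0_compat; apply exp_pos. Qed.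

Lemma Gamma_half : exists l, 0 < l /\
  is_RInt_gen (gi (1 / 2)) (at_right 0) (Rbar_locally p_infty) l.
Proof.
  set (g := fun t => / ((1 + t) * sqrt t)).
  assert (Hg : forall t, 0 < t -> continuous g t).
  { intros t Ht. apply (@ex_derive_continuous R_AbsRing R_NormedModule).
    unfold g. auto_derive. assert (0 < sqrt t) by (apply sqrt_lt_R0; lra).
    repeat split; auto. apply Rgt_not_eq. nra. }
  destruct (MB (gi (1 / 2)) (2 * PI)) as [l [Hl Hle]].
  - intros; apply gi_cont; auto.
  - intros; apply Rlt_le, gi_pos.
  - intros a b Ha Hab.
    apply Rle_trans with (RInt g a b).
    + apply RInt_le; [lra| apply exR; auto; [lra|intros; apply gi_cont; auto] | apply exR; auto; lra |].
      intros x Hx. unfold gi, g.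
      replace (1 / 2 - 1) with (- (/ 2)) by field.
      rewrite Rpower_Ropp, Rpower_sqrt by lra.
      assert (0 < sqrt x) by (apply sqrt_lt_R0; lra).
      assert (H1 : exp (- x) <= / (1 + x)).
      { rewrite exp_Ropp. apply Rinv_le_contravar; [lra|]. left; apply exp_ineq1; lra. }
      rewrite Rinv_mult. assert (0 < / sqrt x) by (apply Rinv_0_lt_compat; lra).
      rewrite (Rmult_comm (/ (1 + x))). apply Rmult_le_compat_l; lra.
    + assert (HI := is_RInt_derive (fun t => 2 * atan (sqrt t)) g a b).
      rewrite Rmin_left, Rmax_right in HI by lra.
      assert (HD : forall x, a <= x <= b -> is_derive (fun t => 2 * atan (sqrt t)) x (g x)).
      { intros x Hx. auto_derive; [lra|].
        unfold g. assert (0 < sqrt x) by (apply sqrt_lt_R0; lra). rewrite Rmult_1_r, sqrt_sqrt by lra. field. lra. }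
      rewrite (is_RInt_unique g a b _ (HI HD ltac:(intros x Hx; apply Hg; lra))).
      unfold minus, plus, opp; simpl.
      pose proof (atan_bound (sqrt a)). pose proof (atan_bound (sqrt b)). lra.
  - exists l. split; auto.
    apply Rlt_le_trans with (RInt (gi (1 / 2)) 1 2); [|apply Hle; lra].
    apply RInt_gt_0; [lra| intros; apply gi_pos | intros; apply gi_cont; lra].
Qed.

Lemma Gam_int n : is_RInt_gen (gi (INR (S n))) (at_right 0) (Rbar_locally p_infty) (INR (fact n)).
Proof.
  induction n.
  - simpl. apply Gamma1.
  - replace (INR (S (S n))) with (INR (S n) + 1) by (rewrite (S_INR (S n)); ring).
    replace (INR (fact (S n))) with (INR (S n) * INR (fact n)) by (rewrite fact_simpl, mult_INR; ring).
    apply IBP; auto. apply lt_0_INR; lia.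
Qed.

Fixpoint hh (n : nat) : R := match n with O => 1 | S n' => (INR n' + 1 / 2) * hh n' end.

Lemma Gam_half n (l : R) : is_RInt_gen (gi (1 / 2)) (at_right 0) (Rbar_locally p_infty) l ->
  is_RInt_gen (gi (INR n + 1 / 2)) (at_right 0) (Rbar_locally p_infty) (hh n * l).
Proof.
  intros Hl. induction n.
  - simpl. replace (0 + 1 / 2) with (1 / 2) by ring. replace (1 * l) with l by ring. auto.
  - replace (INR (S n) + 1 / 2) with ((INR n + 1 / 2) + 1) by (rewrite S_INR; ring).
    simpl hh. rewrite Rmult_assoc. apply IBP; auto.
    pose proof (pos_INR n). lra.
Qed.

Lemma Gamma_eq s (l : R) : is_RInt_gen (gi s) (at_right 0) (Rbar_locally p_infty) l -> Gamma s = l.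
Proof. intros H. unfold Gamma. apply is_RInt_gen_unique. exact H. Qed.

Lemma hh_fact n : hh n * 4 ^ n * INR (fact n) = INR (fact (2 * n)).
Proof.
  induction n.
  - simpl. ring.
  - replace (2 * S n)%nat with (S (S (2 * n))) by lia.
    rewrite !fact_simpl, !mult_INR. rewrite <- IHn. simpl hh.
    rewrite !S_INR, mult_INR. simpl (INR 2). simpl pow. field.
Qed.

Lemma ratio j : hh (S j) * 4 ^ (S j) = Kc j * INR (fact j).
Proof.
  assert (H := hh_fact (S j)).
  assert (H2 : Kc j * INR (fact j) * INR (fact (S j)) = INR (fact (2 * S j))).
  { unfold Kc, cf. replace (2 * S j)%nat with (S (S j + j)) by lia.
    rewrite (fact_simpl (S j + j)), mult_INR.
    replace (S (S j + j)) with (2 * S j)%nat by lia. rewrite mult_INR.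
    pose proof (INR_fact_pos j). pose proof (INR_fact_pos (S j)).
    simpl (INR 2). field. split; lra. }
  pose proof (INR_fact_pos (S j)).
  apply (Rmult_eq_reg_r (INR (fact (S j)))); [|lra]. lra.
Qed.

Lemma inc_beta_value q j : 0 < q < 1 / 2 ->
  inc_beta (4 * (1 - q) * q) (INR (S j)) (1 / 2) = 1 - Qf (1 - q) q (S j) (S j).
Proof.
  intros Hq. destruct Gamma_half as [l [Hl Hgl]].
  unfold inc_beta.
  rewrite (Gamma_eq _ _ (Gam_half (S j) l Hgl)).
  rewrite (Gamma_eq _ _ (Gam_int j)).
  rewrite (Gamma_eq _ _ Hgl).
  rewrite beta_RInt by auto.
  assert (HR := ratio j). pose proof (Kc_pos j). pose proof (INR_fact_pos j).
  assert (0 < 4 ^ S j) by (apply pow_lt; lra).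
  replace (hh (S j)) with (Kc j * INR (fact j) / 4 ^ S j) by (rewrite <- HR; field; lra).
  field. repeat split; lra.
Qed.

Theorem theorem1 (q : R) (z A : nat) :
  0 < q -> q < 1 / 2 -> (1 <= z)%nat -> (z <= A)%nat ->
  let p := 1 - q in
  let lambda := q / p in
  is_lim_seq (fun k => attack_success_by p q z A k)
    ((inc_beta (4 * p * q) (INR z) (1 / 2) - lambda ^ (A + 1))
       / (1 - lambda ^ (A + 1))).
Proof.
  intros Hq0 Hq Hz HzA p lambda.
  destruct z as [|j]; [lia|].
  assert (Hlim := prob_limit p q (S j) A ltac:(unfold p; lra) ltac:(unfold p; lra) Hq0
                    ltac:(unfold p; lra) Hz HzA).
  replace (4 * p * q) with (4 * (1 - q) * q) by (unfold p; ring).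
  rewrite inc_beta_value by lra.
  replace ((1 - Qf (1 - q) q (S j) (S j) - lambda ^ (A + 1)) / (1 - lambda ^ (A + 1)))
    with (Vf p q (S j) A 0 1); auto.
  unfold Vf, Wf, lambda. simpl Nat.leb. cbv iota.
  replace (S j - 0)%nat with (S j) by lia. replace (S j + 1 - 1)%nat with (S j) by lia.
  reflexivity.
Qed.
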